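(* Let $m, k, g$ be positive integers with $m > k$, and let $A \in \mathcal A_k$. Then the numerical semigroups with multiplicity $m$, type $(A; k)$, and genus $g$ are exactly the sets of the form \[ \Lambda = \{0\} \cup (m + A) \cup \bigl(2m + ((A + A)\cap[0, k])\bigr) \cup B \cup [2m + k + 1, \infty) \] where $B$ is any subset of $[m+k+1, 2m+k-1] \setminus (2m + A + A)$ with exactly $2m + k - |A| - |(A + A)\cap[0, k]| - g$ elements. Furthermore, the number of such numerical semigroups equals \[ \binom{m - 1 - |(A + A)\cap[0, k]|}{g + |A|-m-k - 1}. \]
   Context: A numerical semigroup is a subset $\Lambda\subseteq\mathbb{N}_0$ closed under addition, containing $0$, with finite complement in $\mathbb{N}_0$. Its genus is $|\mathbb{N}_0\setminus\Lambda|$, its multiplicity $m$ is its smallest nonzero element and its Frobenius number $f$ is the largest element of $\mathbb{N}_0\setminus\Lambda$. For integers $a\le b$, $[a,b]=\{a,\dots,b\}$, and $[a,\infty)=\{a,a+1,\dots\}$. For $A\subseteq\mathbb{Z}$ and $b\in\mathbb{Z}$, $A+A=\{a_1+a_2:a_1,a_2\in A\}$ and $b+A=\{a+b:a\in A\}$. For a positive integer $k$, $\mathcal A_k = \{A \subseteq [0, k-1] : 0 \in A \text{ and } k \notin A + A\}$. A numerical semigroup $\Lambda$ with multiplicity $m$ and Frobenius number $f$ satisfying $2m<f<3m$ has type $(A;k)$, where $k<m$ is a positive integer and $A\in\mathcal A_k$, if $f=2m+k$ and $\Lambda\cap[m,m+k]=A+m$. The binomial coefficient $\binom{a}{b}$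 is taken to be $0$ unless $0\le b\le a$. *)

(* Defs.v *)
From mathcomp Require Import all_boot all_order all_algebra.
Set Implicit Arguments. Unset Strict Implicit. Unset Printing Implicit Defensive.
Import GRing.Theory Num.Theory.

Definition numerical_semigroup (L : pred nat) : Prop :=
  [/\ L 0, (forall a b, L a -> L b -> L (a + b))
    & exists N, forall n, N <= n -> L n].

Definition multiplicity (L : pred nat) (m : nat) : Prop :=
  [/\ 0 < m, L m & forall n, 0 < n < m -> ~~ L n].

Definition frobenius (L : pred nat) (f : nat) : Prop :=
  ~~ L f /\ forall n, f < n -> L n.

Definition genus (L : pred nat) (g : nat) : Prop :=
  exists N, (forall n, N <= n -> L n) /\ count (predC L) (iota 0 N) = g.

Definition sumset (A : pred nat) (n : nat) : bool :=
  [exists a : 'I_n.+1, A a && A (n - a)].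

Definition in_calA (k : nat) (A : pred nat) : Prop :=
  [/\ forall a, A a -> a < k, A 0 & ~~ sumset A k].

Definition cardA (k : nat) (A : pred nat) : nat := count A (iota 0 k).

Definition cardAA (k : nat) (A : pred nat) : nat := count (sumset A) (iota 0 k.+1).

Definition has_type (L : pred nat) (m : nat) (A : pred nat) (k : nat) : Prop :=
  [/\ 0 < k < m, in_calA k A, frobenius L (2 * m + k)
    & forall n, m <= n <= m + k -> L n = A (n - m)].

Definition binomz (a b : int) : nat :=
  if ((0 <= b) && (b <= a))%R then 'C(`|a|%N, `|b|%N) else 0.

(* Main.v *)
Require Import Defs.
From mathcomp Require Import all_boot all_order all_algebra.
From mathcomp Require Import zify.
From Stdlib Require Import FunctionalExtensionality.

Lemma count_shift (m N : nat) (P : pred nat) :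
  count (fun n => (m <= n) && P (n - m)) (iota 0 (m + N)) = count P (iota 0 N).
Proof.
rewrite iotaD count_cat add0n.
have -> : count (fun n => (m <= n) && P (n - m)) (iota 0 m) = 0.
  rewrite (eq_in_count (a2 := pred0)) ?count_pred0 // => x.
  rewrite mem_iota => /andP[_ Hx] /=.
  have -> : (m <= x) = false by apply/negbTE; rewrite -ltnNge; lia.
  by [].
rewrite -[m in iota m _]addn0 iotaDl count_map add0n.
by apply: eq_count => x /=; rewrite leq_addr addKn.
Qed.

Lemma count_ext (P : pred nat) k N : (forall x, k <= x -> ~~ P x) -> k <= N ->
  count P (iota 0 N) = count P (iota 0 k).
Proof.
move=> HP HkN. rewrite -(subnKC HkN) iotaD count_cat add0n.
rewrite (eq_in_count (a2 := pred0) (s := iota k (N - k))) ?count_pred0 ?addn0 // => x.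
rewrite mem_iota => /andP[Hx _] /=. exact/negbTE/HP.
Qed.

Lemma count_or (a b : pred nat) s : (forall x, x \in s -> ~~ (a x && b x)) ->
  count (fun x => a x || b x) s = count a s + count b s.
Proof.
elim: s => //= x s IH H. rewrite IH; last by move=> y Hy; apply: H; rewrite inE Hy orbT.
have := H x (mem_head _ _). case: (a x); case: (b x) => //= _; lia.
Qed.

Lemma count_split (a b : pred nat) s :
  count (fun x => a x && ~~ b x) s + count (fun x => a x && b x) s = count a s.
Proof.
elim: s => //= x s IH. case: (a x); case: (b x) => /=; lia.
Qed.
Lemma card_count (p : nat) (C : pred nat) (P : seq nat) : size P = p ->
  #|[set i : 'I_p | C (nth 0 P i)]| = count C P.
Proof.
move=> Hp. rewrite cardsE cardE /enum_mem size_filter.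
have -> : count C P = count C (map (nth 0 P) (iota 0 p)).
  by rewrite -Hp -/(mkseq _ _) mkseq_nth.
rewrite -val_enum_ord -map_comp count_map. rewrite enumT; by apply: eq_count.
Qed.

Definition Lof m k (A B : pred nat) : pred nat := fun n =>
  [|| n == 0, (m <= n) && A (n - m),
      (2 * m <= n) && (n - 2 * m <= k) && sumset A (n - 2 * m), B n
    | 2 * m + k + 1 <= n].
Definition Qp m k (A : pred nat) : pred nat := fun b =>
  (m + k + 1 <= b <= 2 * m + k - 1) && ~~ ((2 * m <= b) && sumset A (b - 2 * m)).

Section Lofs.
Variables (m k : nat) (A B : pred nat).
Hypotheses (Hm : 0 < m) (Hk : 0 < k) (Hkm : k < m) (HA : in_calA k A)
  (HB : forall b, B b -> Qp m k A b).

Lemma HBr b : B b -> m + k + 1 <= b <= 2 * m + k - 1.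
Proof. by move/HB => /andP[]. Qed.
Lemma HAk a : A a -> a < k.
Proof. by case: HA => H _ _; apply: H. Qed.

Lemma Lof_small n : 0 < n < m -> Lof m k A B n = false.
Proof.
move=> Hn; rewrite /Lof.
have -> : (n == 0) = false by apply/negbTE; lia.
have -> : (m <= n) = false by apply/negbTE; lia.
have -> : (2 * m <= n) = false by apply/negbTE; lia.
have -> : (2 * m + k + 1 <= n) = false by apply/negbTE; lia.
case E: (B n) => //. move/HBr: E; lia.
Qed.

Lemma Lof_mid n : m <= n <= m + k -> Lof m k A B n = A (n - m).
Proof.
move=> Hn; rewrite /Lof.
have -> : (n == 0) = false by apply/negbTE; lia.
have -> : (m <= n) = true by lia.
have -> : (2 * m <= n) = false by apply/negbTE; lia.
have -> : (2 * m + k + 1 <= n) = false by apply/negbTE; lia.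
case E: (B n); last by rewrite /= orbF.
move/HBr: E; lia.
Qed.

Lemma Lof_hi n : m + k + 1 <= n <= 2 * m + k - 1 ->
  Lof m k A B n = ((2 * m <= n) && sumset A (n - 2 * m)) || B n.
Proof.
move=> Hn; rewrite /Lof.
have -> : (n == 0) = false by apply/negbTE; lia.
have -> : A (n - m) = false.
  case E: (A (n - m)) => //. move/HAk: E; lia.
have -> : (2 * m + k + 1 <= n) = false by apply/negbTE; lia.
rewrite andbF /= orbF.
by case H2: (2 * m <= n) => //=; have -> : (n - 2 * m <= k) = true by lia.
Qed.

Lemma Lof_frob : Lof m k A B (2 * m + k) = false.
Proof.
rewrite /Lof.
have -> : (2 * m + k == 0) = false by apply/negbTE; lia.
have -> : A (2 * m + k - m) = false.
  case E: (A _) => //. move/HAk: E; lia.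
have -> : (2 * m + k + 1 <= 2 * m + k) = false by apply/negbTE; lia.
have -> : 2 * m + k - 2 * m = k by lia.
case: HA => _ _ /negbTE ->.
case E: (B _); last by rewrite !andbF.
move/HBr: E; lia.
Qed.

Lemma Lof_big n : 2 * m + k + 1 <= n -> Lof m k A B n.
Proof. by move=> H; rewrite /Lof H !orbT. Qed.

Lemma Lof_cls a : Lof m k A B a -> a = 0 \/ (exists2 x, a = m + x & A x) \/ m + k + 1 <= a.
Proof.
rewrite /Lof => /orP[/eqP -> |]; first by left.
case/orP => [/andP[H1 H2]|]; first by right; left; exists (a - m) => //; lia.
case/orP => [/andP[/andP[H1 _] _]|]; first by right; right; lia.
case/orP => [/HBr H|H]; by right; right; lia.
Qed.

Lemma Lof_add a b : Lof m k A B a -> Lof m k A B b -> Lof m k A B (a + b).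
Proof.
move=> Ha Hb. case/Lof_cls: (Ha) => [->|[[x Ex Ax]|Ha1]]; first by rewrite add0n.
all: case/Lof_cls: (Hb) => [->|[[y Ey Ay]|Hb1]]; first by rewrite addn0.
all: try by apply: Lof_big; lia.
subst a b.
case: (leqP (x + y) k) => Hxy; last by apply: Lof_big; lia.
rewrite /Lof.
have -> : m + x + (m + y) - 2 * m = x + y by lia.
have -> : 2 * m <= m + x + (m + y) by lia.
rewrite Hxy /=.
have -> : sumset A (x + y).
  apply/existsP. have Hx : x < (x + y).+1 by lia.
  exists (Ordinal Hx) => /=. by rewrite Ax addKn Ay.
by rewrite !orbT.
Qed.

End Lofs.

Section Counts.
Variables (m k : nat) (A B : pred nat).
Hypotheses (Hm : 0 < m) (Hk : 0 < k) (Hkm : k < m) (HA : in_calA k A)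
  (HB : forall b, B b -> Qp m k A b).

Lemma count_Lof : count (Lof m k A B) (iota 0 (2 * m + k + 1)) =
  1 + cardA k A + cardAA k A + count B (iota 0 (2 * m + k)).
Proof.
have HBr := @HBr m k A B HB. have HAk := @HAk k A HA.
rewrite (eq_in_count (a2 := fun n => [|| n == 0, (m <= n) && A (n - m),
      (2 * m <= n) && (n - 2 * m <= k) && sumset A (n - 2 * m) | B n])); last first.
  move=> x; rewrite mem_iota => /andP[_ Hx] /=; rewrite /Lof.
  have -> : (2 * m + k + 1 <= x) = false by apply/negbTE; lia.
  by rewrite orbF.
rewrite count_or; last first.
  move=> x _; apply/negP => /andP[/eqP ->].
  case/orP => [/andP[H _]|]; first by lia.
  case/orP => [/andP[/andP[H _] _]|/HBr]; lia.
rewrite count_or; last first.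
  move=> x _; apply/negP => /andP[/andP[H1 /HAk H2]].
  case/orP => [/andP[/andP[H _] _]|/HBr]; lia.
rewrite count_or; last first.
  move=> x _; apply/negP => /andP[/andP[/andP[H1 _] H2] /HB /andP[_]].
  by rewrite H1 H2.
have -> : count (fun n => n == 0) (iota 0 (2 * m + k + 1)) = 1.
  rewrite addn1 /= (eq_in_count (a2 := pred0)) ?count_pred0 // => x.
  by rewrite mem_iota => /andP[H _] /=; apply/negbTE; lia.
have -> : count (fun n => (m <= n) && A (n - m)) (iota 0 (2 * m + k + 1)) = cardA k A.
  rewrite (_ : 2 * m + k + 1 = m + (m + k + 1)); last by lia.
  rewrite count_shift /cardA (@count_ext A k (m + k + 1)) //; last by lia.
  move=> x Hx; apply/negP => /HAk; lia.
have -> : count (fun n => (2 * m <= n) && (n - 2 * m <= k) && sumset A (n - 2 * m))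
   (iota 0 (2 * m + k + 1)) = cardAA k A.
  rewrite (eq_count (a2 := fun n => (2 * m <= n) &&
     ((fun y => (y <= k) && sumset A y) (n - 2 * m)))); last by move=> x /=; rewrite andbA.
  rewrite (_ : 2 * m + k + 1 = 2 * m + k.+1); last by lia.
  rewrite (count_shift (2 * m) k.+1 (fun y => (y <= k) && sumset A y)) /cardAA. apply: eq_in_count => x.
  by rewrite mem_iota => /andP[_ H] /=; rewrite (_ : x <= k); last lia.
rewrite (@count_ext B (2 * m + k) (2 * m + k + 1)) //; last by lia.
- by rewrite !addnA.
- move=> x Hx; apply/negP => /HBr; lia.
Qed.

End Counts.

Lemma genus_count (L : pred nat) N0 g : (forall n, N0 <= n -> L n) ->
  genus L g <-> count (predC L) (iota 0 N0) = g.
Proof.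
move=> H0; split; last by move=> Hc; exists N0.
case=> N [HN Hc]. rewrite -Hc.
have E1 := @count_ext (predC L) N0 (maxn N N0).
have E2 := @count_ext (predC L) N (maxn N N0).
rewrite -E1 ?E2 // ?leq_maxl ?leq_maxr //.
- by move=> x /HN /= ->.
- by move=> x /H0 /= ->.
Qed.

Definition valid m k g A L :=
  numerical_semigroup L /\ multiplicity L m /\ has_type L m A k /\ genus L g.

Lemma char m k g (A L : pred nat) : 0 < m -> 0 < k -> k < m -> in_calA k A ->
  valid m k g A L <->
  exists B : pred nat,
    [/\ (forall b, B b -> Qp m k A b),
        (count B (iota 0 (2 * m + k)) : int)
             = ((2 * m + k)%:Z - (cardA k A)%:Z - (cardAA k A)%:Z - g%:Z)%R
      & forall n, L n = Lof m k A B n].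
Proof.
move=> Hm Hk Hkm HA. split; last first.
  case=> B [HB Hc HL].
  have -> : L = Lof m k A B by apply: functional_extensionality.
  have HAk := @HAk k A HA.
  split; [|split; [|split]].
  - split.
    + by rewrite /Lof eqxx.
    + by move=> a b; apply: Lof_add.
    + by exists (2 * m + k + 1) => n; apply: Lof_big.
  - split => //.
    + rewrite Lof_mid // ?subnn; first by case: HA.
      lia.
    + by move=> n Hn; rewrite Lof_small.
  - split => //; try by apply/andP.
    all: try (split; first by rewrite Lof_frob).
    all: try by move=> n Hn; apply: Lof_big; lia.
    all: try by move=> n Hn; rewrite Lof_mid.
  - rewrite (@genus_count _ (2 * m + k + 1)); last by move=> n; apply: Lof_big.
    have := count_predC (Lof m k A B) (iota 0 (2 * m + k + 1)).
    rewrite size_iota count_Lof //. lia.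
case=> [[L0 Ladd _] [[_ Lm Lsmall] [[_ _ [Lf Lbig] Lmid] Hg]]].
pose B := fun n => Qp m k A n && L n.
have HB : forall b, B b -> Qp m k A b by move=> b /andP[].
have HAk := @HAk k A HA.
have HL : forall n, L n = Lof m k A B n.
  move=> n.
  case: (posnP n) => [->|Hn0]; first by rewrite L0 /Lof eqxx.
  case: (ltnP n m) => Hnm; first by rewrite Lof_small // ?Hn0 //; apply/negbTE/Lsmall; lia.
  case: (leqP n (m + k)) => Hnk; first by rewrite Lof_mid // ?Hnm // Lmid // Hnm.
  case: (ltnP n (2 * m + k)) => Hn2.
    rewrite Lof_hi //; last by lia.
    rewrite /B /Qp.
    have -> : (m + k + 1 <= n <= 2 * m + k - 1) = true by lia.
    case E: ((2 * m <= n) && sumset A (n - 2 * m)) => /=; last by [].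
    case/andP: E => H2 /existsP [a /andP[Aa Ab]].
    have Ha := HAk _ Aa. have Hb := HAk _ Ab. have Hale := ltn_ord a.
    have -> : n = (m + a) + (m + (n - 2 * m - a)) by lia.
    apply: Ladd.
    - by rewrite Lmid ?addKn //; lia.
    - by rewrite Lmid ?addKn //; lia.
  case: (leqP n (2 * m + k)) => Hn3.
    have -> : n = 2 * m + k by lia.
    by rewrite Lof_frob //; apply/negbTE.
  by rewrite Lbig // Lof_big //; lia.
exists B; split => //.
have Hext : forall n, 2 * m + k + 1 <= n -> L n by move=> n Hn; apply: Lbig; lia.
move: Hg; rewrite (genus_count L (2 * m + k + 1) g Hext) => Hg.
have Hg' : count (predC (Lof m k A B)) (iota 0 (2 * m + k + 1)) = g.
  by rewrite -Hg; apply: eq_count => x /=; rewrite HL.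
have := count_predC (Lof m k A B) (iota 0 (2 * m + k + 1)).
rewrite size_iota count_Lof // Hg'. lia.
Qed.

Definition Pl m k A := filter (Qp m k A) (iota 0 (2 * m + k)).
Definition BS (P : seq nat) (S : {set 'I_(size P)}) : pred nat :=
  fun n => [exists i : 'I_(size P), (i \in S) && (nth 0 P i == n)].
Arguments BS {P} S n.

Lemma BS_nth (P : seq nat) (S : {set 'I_(size P)}) (j : 'I_(size P)) :
  uniq P -> BS S (nth 0 P j) = (j \in S).
Proof.
move=> uP; apply/existsP/idP => [[i /andP[Hi /eqP E]] | Hj].
  have := E; move/eqP; rewrite nth_uniq // => /eqP Hij.
  by have <- : i = j by apply: val_inj.
by exists j; rewrite Hj eqxx.
Qed.

Lemma BS_Q m k A (S : {set 'I_(size (Pl m k A))}) n : BS S n -> Qp m k A n.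
Proof.
case/existsP => i /andP[_ /eqP <-].
have : nth 0 (Pl m k A) i \in Pl m k A by apply: mem_nth.
by rewrite mem_filter => /andP[].
Qed.

Lemma card_BS (P : seq nat) (S : {set 'I_(size P)}) : uniq P ->
  count (BS S) P = #|S|.
Proof.
move=> uP; rewrite -(@card_count (size P) (BS S) P (erefl _)).

by apply: eq_card => j; rewrite inE BS_nth.
Qed.

Lemma count_Pl m k A (B : pred nat) : (forall b, B b -> Qp m k A b) ->
  count B (iota 0 (2 * m + k)) = count B (Pl m k A).
Proof.
move=> HB; rewrite /Pl count_filter; apply: eq_count => x /=.
by case E: (B x) => //=; rewrite HB.
Qed.

Lemma size_Pl m k A : 0 < m -> 0 < k -> k < m -> in_calA k A ->
  size (Pl m k A) = m - 1 - cardAA k A /\ cardAA k A <= k.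
Proof.
move=> Hm Hk Hkm HA.
pose P' := fun y => (y <= k) && sumset A y.
have HP'k : count P' (iota 0 k.+1) = count P' (iota 0 k).
  apply: count_ext => // x Hx; rewrite /P'.
  case: (ltnP k x) => H; first by apply/negP => /andP[H1 _]; lia.
  have -> : x = k by lia.
  by case: HA => _ _ ->.
have HAA : cardAA k A = count P' (iota 0 k).
  rewrite -HP'k /cardAA; apply: eq_in_count => x.
  by rewrite mem_iota => /andP[_ H] /=; rewrite /P' (_ : x <= k); last lia.
have HAAk : cardAA k A <= k by rewrite HAA; apply: leq_trans (count_size _ _) _; rewrite size_iota.
split => //.
rewrite /Pl size_filter /Qp.
have := count_split (fun b => m + k + 1 <= b <= 2 * m + k - 1)
   (fun b => (2 * m <= b) && sumset A (b - 2 * m)) (iota 0 (2 * m + k)).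
have -> : count (fun x => (m + k + 1 <= x <= 2 * m + k - 1) &&
          ((2 * m <= x) && sumset A (x - 2 * m))) (iota 0 (2 * m + k)) = cardAA k A.
  rewrite HAA -(count_shift (2 * m) k P').
  apply: eq_in_count => x; rewrite mem_iota => /andP[_ Hx] /=.
  case H: (2 * m <= x) => /=; last by rewrite andbF.
  have -> : (m + k + 1 <= x <= 2 * m + k - 1) = true by lia.
  by rewrite /P' (_ : x - 2 * m <= k) //; lia.
have -> : count (fun b => m + k + 1 <= b <= 2 * m + k - 1) (iota 0 (2 * m + k)) = m - 1.
  rewrite (eq_count (a2 := fun x => (m + k + 1 <= x) &&
           ((fun y => y < m - 1) (x - (m + k + 1))))); last first.
    move=> x /=; apply/idP/idP => /andP[H1 H2]; apply/andP; split; lia.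
  rewrite (_ : 2 * m + k = m + k + 1 + (m - 1)); last by lia.
  rewrite (count_shift (m + k + 1) (m - 1) (fun y => y < m - 1)) (eq_in_count (a2 := predT)) ?count_predT ?size_iota //.
  by move=> x; rewrite mem_iota.
move=> E. lia.
Qed.

Lemma binomzE p r : binomz (p%:Z) (p%:Z - r%:Z)%R = 'C(p, r).
Proof.
rewrite /binomz. case: (leqP r p) => H.
  have -> : ((0 <= p%:Z - r%:Z) && (p%:Z - r%:Z <= p%:Z))%R = true by apply/andP; split; lia.
  by rewrite subzn // absz_nat bin_sub.
have -> : (0 <= p%:Z - r%:Z)%R = false by apply/negbTE; apply/negP => H'; lia.
by rewrite /= bin_small.
Qed.

Lemma B_of_Lof m k A (B : pred nat) : 0 < m -> 0 < k -> k < m -> in_calA k A ->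
  (forall b, B b -> Qp m k A b) -> forall n, B n = Qp m k A n && Lof m k A B n.
Proof.
move=> Hm Hk Hkm HA HB n.
case E: (Qp m k A n) => /=; last by apply/negbTE/negP => /HB; rewrite E.
move: E; rewrite /Qp => /andP[Hr Hs].
by rewrite Lof_hi // (negbTE Hs).
Qed.

Theorem corollary3p4 (m k g : nat) (A : pred nat) :
  0 < m -> 0 < k -> 0 < g -> k < m -> in_calA k A ->
  (forall L : pred nat,
     (numerical_semigroup L /\ multiplicity L m /\ has_type L m A k /\ genus L g)
     <->
     exists B : pred nat,
       [/\ (forall b, B b ->
              (m + k + 1 <= b <= 2 * m + k - 1) &&
              ~~ ((2 * m <= b) && sumset A (b - 2 * m))),
           (count B (iota 0 (2 * m + k)) : int)
             = ((2 * m + k)%:Z - (cardA k A)%:Z - (cardAA k A)%:Z - g%:Z)%R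
         & forall n, L n =
             [|| n == 0,
                 (m <= n) && A (n - m),
                 (2 * m <= n) && (n - 2 * m <= k) && sumset A (n - 2 * m),
                 B n
               | 2 * m + k + 1 <= n]])
  /\
  (exists Ls : seq (pred nat),
     [/\ size Ls = binomz ((m%:Z - 1 - (cardAA k A)%:Z)%R)
                          ((g%:Z + (cardA k A)%:Z - m%:Z - k%:Z - 1)%R),
         (forall i j, i < size Ls -> j < size Ls ->
            (forall n, nth (xpred0 : pred nat) Ls i n = nth (xpred0 : pred nat) Ls j n) -> i = j),
         (forall i, i < size Ls ->
            let L := nth (xpred0 : pred nat) Ls i in
            numerical_semigroup L /\ multiplicity L m /\ has_type L m A k /\ genus L g)
       & (forall L : pred nat,
            numerical_semigroup L /\ multiplicity L m /\ has_type L m A k /\ genus L g ->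
            exists2 i, i < size Ls & forall n, L n = nth (xpred0 : pred nat) Ls i n)]).
Proof.
move=> Hm Hk Hg Hkm HA.
have Hch := fun L => char m k g A L Hm Hk Hkm HA.
split; first exact: Hch.
have [sP cAAk] := size_Pl m k A Hm Hk Hkm HA.
have uP : uniq (Pl m k A) by rewrite filter_uniq // iota_uniq.
case: (leqP (cardA k A + cardAA k A + g) (2 * m + k)) => HR; last first.
  exists [::]; split => //.
  - rewrite /binomz; case: ifP => // /andP[_ H]; lia.
  - move=> L /(Hch L) [B [_ Hc _]]; lia.
set r := 2 * m + k - (cardA k A + cardAA k A + g).
set P := Pl m k A.
set e := enum [set S : {set 'I_(size P)} | #|S| == r].
have He : forall i, i < size e -> #|nth set0 e i| = r.
  move=> i Hi; have := mem_nth set0 Hi.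
  by rewrite mem_enum inE => /eqP.
exists (map (fun S : {set 'I_(size P)} => Lof m k A (BS S)) e).
split.
- rewrite size_map /e -cardE card_draws card_ord.
  have -> : (m%:Z - 1 - (cardAA k A)%:Z)%R = ((size P)%:Z)%R.
    rewrite /P sP; lia.
  have -> : (g%:Z + (cardA k A)%:Z - m%:Z - k%:Z - 1)%R = ((size P)%:Z - r%:Z)%R.
    rewrite /P sP /r; lia.
  by rewrite binomzE.
- move=> i j; rewrite size_map => Hi Hj Hn.
  rewrite !(nth_map set0) // in Hn.
  have HBS : forall S : {set 'I_(size P)}, forall b, BS S b -> Qp m k A b.
    by move=> S b; apply: BS_Q.
  have EB : forall n, BS (nth set0 e i) n = BS (nth set0 e j) n.
    move=> n; rewrite (@B_of_Lof m k A _ Hm Hk Hkm HA (HBS _)) Hn.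
    by rewrite -(@B_of_Lof m k A _ Hm Hk Hkm HA (HBS _)).
  have ES : nth set0 e i = nth set0 e j.
    by apply/setP => t; rewrite -!BS_nth // EB.
  apply/eqP; rewrite -(nth_uniq set0 Hi Hj (enum_uniq _)).
  by apply/eqP.
- move=> i; rewrite size_map => Hi /=.
  rewrite (nth_map set0) //.
  apply/(Hch _); exists (BS (nth set0 e i)); split => //.
  + by move=> b; apply: BS_Q.
  + rewrite (@count_Pl m k A _ (@BS_Q m k A (nth set0 e i))) card_BS // He //.
    rewrite /r; lia.
- move=> L /(Hch L) [B [HB Hc HL]].
  pose S := [set t : 'I_(size P) | B (nth 0 P t)].
  have HS : #|S| = r.
    rewrite (@card_count (size P) B P (erefl _)) -(@count_Pl m k A B HB).
    rewrite /r; lia.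
  have Se : S \in e by rewrite mem_enum inE HS.
  exists (index S e); first by rewrite size_map index_mem.
  move=> n; rewrite (nth_map set0) ?index_mem // nth_index // HL.
  have -> : BS S = B; last by [].
  apply: functional_extensionality => x.
  apply/idP/idP.
  + by case/existsP => t /andP[]; rewrite inE => Ht /eqP <-.
  + move=> Bx. have Hx : x \in P.
      rewrite /P /Pl mem_filter HB // mem_iota /=.
      move/HB: Bx => /andP[/andP[_ H] _]; lia.
    have Hix : index x P < size P by rewrite index_mem.
    apply/existsP; exists (Ordinal Hix) => /=.
    by rewrite inE /= nth_index // Bx eqxx.
Qed.
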